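(* Let $X_n$, $Y_n$, $Y$ be as in the context. For every $n\in\mathbb{N}$ and every subgraph $\Gamma$ of $X_n$ there is a coarse $1$-wiring of $\Gamma$ into $Y$ with volume at most $|VY_n|=(2^{2^{2n+1}}f(n)+1)f(n)$.
   Context: Fix a function $f:\mathbb{N}\to\mathbb{N}$ (with $\mathbb{N}=\{1,2,\dots\}$) that is surjective, satisfies $f(1)=1$, $2\leq f(n)\leq n$ for all $n\geq 2$, and $|f^{-1}(k)|=\infty$ for every $k\geq 2$. For $n\in\mathbb{N}$ let $X_n$ be the graph with vertex set $\{0,1,\dots,f(n)-1\}\times\{0,1,\dots,2^{2^{2n}}f(n)\}$, with edges $(i,j)(i,j+1)$ for all $0\leq i\leq f(n)-1$, $0\leq j\leq 2^{2^{2n}}f(n)-1$, and $(i,j)(i+1,j)$ for all $0\leq i\leq f(n)-2$ and all $j$ that are multiples of $2^{2^{2n}}$. Let $Y_n$ be defined in the same way with $2^{2^{2n}}$ replaced everywhere by $2^{2^{2n+1}}$. Let $Y=\bigsqcup_{n\geq1}Y_n$. A wiring of a finite graph $\Gamma$ into $Y$ is a continuous map sending vertices to vertices and each edge onto a union of edges (a path between the images of its endpoints, or a single vertex if these coincide); it is a coarse $k$-wiring if each vertex of $Y$ has at most $k$ preimage vertices and each edge of $Y$ lies in the images of at most $k$ edges of $\Gamma$; its volume is the number of vertices of its image. *)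

(* Defs.v *)
From mathcomp Require Import all_boot.
Set Implicit Arguments. Unset Strict Implicit. Unset Printing Implicit Defensive.

(* Conditions on f : N -> N (N = {1,2,...}; the value f 0 is irrelevant). *)
Definition admissible_f (f : nat -> nat) : Prop :=
  [/\ (forall k, 1 <= k -> exists n, 1 <= n /\ f n = k),
      f 1 = 1,
      (forall n, 2 <= n -> 2 <= f n <= n) &
      (forall k, 2 <= k -> forall N, exists n, N <= n /\ f n = k)].

(* The "ladder" graph with spacing a and b rails:
   vertices {0..b-1} x {0..a*b},
   edges (i,j)(i,j+1) and (i,j)(i+1,j) when a divides j. *)
Definition ladderV (a b : nat) (x : nat * nat) : bool :=
  (x.1 < b) && (x.2 <= a * b).

Definition ladderE (a b : nat) (x y : nat * nat) : bool :=
  [&& ladderV a b x, ladderV a b y &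
     ((x.1 == y.1) && ((x.2.+1 == y.2) || (y.2.+1 == x.2)))
  || [&& x.2 == y.2, a %| x.2 & (x.1.+1 == y.1) || (y.1.+1 == x.1)]].

Definition spX (n : nat) : nat := 2 ^ (2 ^ (2 * n)).
Definition spY (n : nat) : nat := 2 ^ (2 ^ (2 * n).+1).

Definition XV f n := ladderV (spX n) (f n).
Definition XE f n := ladderE (spX n) (f n).
Definition YnV f n := ladderV (spY n) (f n).
Definition YnE f n := ladderE (spY n) (f n).

(* Y = disjoint union over m >= 1 of Y_m; a vertex (m, v) is v in copy Y_m. *)
Definition Yvert := (nat * (nat * nat))%type.
Definition YV f (y : Yvert) : bool := (1 <= y.1) && YnV f y.1 y.2.
Definition YE f (y z : Yvert) : bool :=
  [&& 1 <= y.1, y.1 == z.1 & YnE f y.1 y.2 z.2].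

Definition cardVYn f n : nat := (spY n * f n + 1) * f n.

(* Gamma = (GV, GE) is a subgraph of X_n; GE is a symmetric adjacency relation,
   an (unordered) edge {u,v} of Gamma being a pair with GE u v. *)
Definition subgraph_X f n (GV : pred (nat * nat)) (GE : rel (nat * nat)) : Prop :=
  [/\ (forall u, GV u -> XV f n u),
      (forall u v, GE u v -> [&& GV u, GV v & XE f n u v]) &
      (forall u v, GE u v -> GE v u)].

(* p is a path (no repeated vertices) in Y from a to b, given as its
   vertex sequence starting at a. *)
Definition Ypath f (a b : Yvert) (p : seq Yvert) : Prop :=
  [/\ head a p = a, size p > 0, path (YE f) a (behead p),
      last a (behead p) = b & uniq p].

Definition steps (p : seq Yvert) : seq (Yvert * Yvert) := zip p (behead p).

Definition share_edge (p q : seq Yvert) : Prop :=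
  exists a b, (a, b) \in steps p /\ ((a, b) \in steps q \/ (b, a) \in steps q).

(* A coarse 1-wiring of Gamma into Y: phi on vertices, and for each edge
   {u,v} a path wp u v in Y from phi u to phi v (wp v u being the reverse). *)
Definition coarse_1_wiring f (GV : pred (nat * nat)) (GE : rel (nat * nat))
    (phi : nat * nat -> Yvert) (wp : nat * nat -> nat * nat -> seq Yvert) : Prop :=
  [/\ (forall u, GV u -> YV f (phi u)),
      (forall u v, GE u v -> Ypath f (phi u) (phi v) (wp u v)),
      (forall u v, GE u v -> wp v u = rev (wp u v)),
      (* each vertex of Y has at most 1 preimage vertex *)
      (forall u v, GV u -> GV v -> phi u = phi v -> u = v) &
      (* each edge of Y lies in the image of at most 1 edge of Gamma *)
      (forall u v u' v', GE u v -> GE u' v' ->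
         ~ ((u = u' /\ v = v') \/ (u = v' /\ v = u')) ->
         ~ share_edge (wp u v) (wp u' v'))].

(* volume = number of vertices of the image; "at most N" *)
Definition volume_le (GV : pred (nat * nat)) (GE : rel (nat * nat))
    (phi : nat * nat -> Yvert) (wp : nat * nat -> nat * nat -> seq Yvert)
    (N : nat) : Prop :=
  exists s : seq Yvert, size s <= N /\
    (forall y, ((exists u, GV u /\ phi u = y)
                \/ (exists u v, GE u v /\ y \in wp u v)) -> y \in s).

(* Main.v *)
Require Import Defs.
From mathcomp Require Import all_boot zify.

Lemma spX_gt0 n : 0 < spX n.
Proof. by rewrite /spX expn_gt0. Qed.

Lemma spY_sq n : spY n = spX n * spX n.
Proof.
rewrite /spY /spX expnS mulnC expnM.
by rewrite expnS expn1.
Qed.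

Lemma steps_nth (p : seq Yvert) a b d : (a,b) \in steps p ->
  exists i, i.+1 < size p /\ nth d p i = a /\ nth d p i.+1 = b.
Proof.
move/(nthP (d,d)) => [i Hi Hn]; exists i.
move: Hn; rewrite nth_zip_cond Hi /= nth_behead => -[<- <-].
move: Hi; rewrite size_zip size_behead => Hi; split => //; case: p Hi => //= x p Hi; by rewrite ltnS; move: Hi; rewrite (minn_idPr (leqnSn _)).
Qed.

Lemma XE_cases f n u v : XE f n u v ->
  [/\ u.1 < f n, v.1 < f n, u.2 <= spX n * f n, v.2 <= spX n * f n &
  [\/ u.1 = v.1 /\ v.2 = u.2.+1, u.1 = v.1 /\ u.2 = v.2.+1 |
      u.1 != v.1 /\ u.2 = v.2 /\ spX n %| u.2 /\ (u.1.+1 = v.1 \/ v.1.+1 = u.1)]].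
Proof.
rewrite /XE /ladderE /ladderV => /and3P [/andP[h1 h2] /andP[h3 h4]].
case/orP.
  case/andP => /eqP e /orP[] /eqP e2; split => //; [apply: Or31 | apply: Or32]; by [].
case/and3P => /eqP e hd /orP[] /eqP e2; split => //; apply: Or33; (split; [apply/eqP; lia| split => //; split => //; lia]).
Qed.

Lemma vert_props f n c m (g : nat -> nat) :
  1 <= n -> c < f n -> m.+1 <= spX n * f n ->
  (forall i, i <= spX n -> g i <= spX n) ->
  (forall i, i < spX n -> (g i).+1 = g i.+1 \/ (g i.+1).+1 = g i) ->
  (forall i j, i <= spX n -> j <= spX n -> g i = g j -> i = j) ->
  let p := mkseq (fun i => (n,(c, m * spX n + g i))) (spX n).+1 in
  [/\ (forall y, y \in p -> y.1 = n /\ YnV f n y.2),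
      path (YE f) (n,(c, m * spX n + g 0)) (behead p), uniq p &
      (forall a b, (a,b) \in steps p -> [/\ a.1 = n, b.1 = n, a.2.1 = c, b.2.1 = c &
          m * spX n <= minn a.2.2 b.2.2 < m * spX n + spX n /\ a.2.2 != b.2.2])].
Proof.
move=> hn hc hm hg hs hi p.
set s := spX n in hm hg hs hi p *.
have s0 : 0 < s by apply: spX_gt0.
have hY : spY n = s * s by rewrite spY_sq.
have hms : m * s + s <= s * s * f n.
  have := leq_mul hm (leqnn s). rewrite mulSn. lia.
have memP : forall y, y \in p -> exists2 i, i <= s & y = (n,(c, m * s + g i)).
  move=> y /(nthP (0,(0,0))) [i]; rewrite size_mkseq => Hi <-.
  by exists i => //; rewrite nth_mkseq.
have Vok : forall i, i <= s -> YnV f n (c, m * s + g i).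
  move=> i Hi; rewrite /YnV /ladderV /= hc hY /=.
  have := hg i Hi; lia.
split.
- by move=> y /memP [i Hi ->]; split => //; apply: Vok.
- have Hp : p = (n,(c, m * s + g 0)) :: behead p by [].
  apply/(pathP (0,(0,0))) => i; rewrite -Hp nth_behead size_behead size_mkseq => Hi.
  rewrite !nth_mkseq; [|lia|lia].
  rewrite /YE /= hn eqxx /=. have V1 : YnV f n (c, m * s + g i) by apply: Vok; lia. have V2 : YnV f n (c, m * s + g i.+1) by apply: Vok; lia. rewrite /YnV in V1 V2. rewrite /YnE /ladderE V1 V2 /=.
  rewrite eqxx /=. have := hs i Hi. case=> <-; apply/orP; left; apply/orP; [left|right]; lia.
- apply/(uniqP (0,(0,0))) => i j; rewrite !inE size_mkseq => Hi Hj.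
  rewrite !nth_mkseq // => -[] E; apply: hi; lia.
- move=> a b /(@steps_nth _ _ _ (0,(0,0))) [i [Hi [Ha Hb]]].
  move: Hi Ha Hb; rewrite size_mkseq => Hi.
  rewrite !nth_mkseq; [|lia|lia] => <- <- /=; split => //.
  have := hs i Hi; have := hg i; have := hg i.+1; rewrite minnE; lia.
Qed.

Definition phiF n (u : nat * nat) : Yvert := (n, (u.1, u.2 * spX n)).
Definition wpF n (u v : nat * nat) : seq Yvert :=
  if u.1 == v.1 then
    if u.2 < v.2 then mkseq (fun i => (n, (u.1, u.2 * spX n + i))) (spX n).+1
    else mkseq (fun i => (n, (u.1, v.2 * spX n + (spX n - i)))) (spX n).+1
  else [:: phiF n u; phiF n v].

Lemma rev_mkseq (T : Type) (h : nat -> T) k :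
  rev (mkseq h k.+1) = mkseq (fun i => h (k - i)) k.+1.
Proof.
have x0 : T by exact: h 0.
apply: (eq_from_nth (x0 := x0)); first by rewrite size_rev !size_mkseq.
move=> i; rewrite size_rev size_mkseq => Hi.
rewrite nth_rev ?size_mkseq // !nth_mkseq //; try lia.
Qed.

Lemma phi_inj n u v : 0 < spX n -> phiF n u = phiF n v -> u = v.
Proof.
move=> s0; case: u v => [u1 u2] [v1 v2] [-> /eqP].
by rewrite eqn_pmul2r // => /eqP ->.
Qed.

Lemma m_eq s m m' K : 0 < s -> m * s <= K < m * s + s -> m' * s <= K < m' * s + s -> m = m'.
Proof.
move=> s0 h1 h2; apply/eqP; rewrite eqn_leq; apply/andP; split; rewrite leqNgt; apply/negP => lt.
- have := leq_mul lt (leqnn s); rewrite mulSn; lia.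
- have := leq_mul lt (leqnn s); rewrite mulSn; lia.
Qed.

Lemma vert_Ypath f n c m (g : nat -> nat) :
  1 <= n -> c < f n -> m.+1 <= spX n * f n ->
  (forall i, i <= spX n -> g i <= spX n) ->
  (forall i, i < spX n -> (g i).+1 = g i.+1 \/ (g i.+1).+1 = g i) ->
  (forall i j, i <= spX n -> j <= spX n -> g i = g j -> i = j) ->
  Ypath f (n,(c, m * spX n + g 0)) (n,(c, m * spX n + g (spX n)))
    (mkseq (fun i => (n,(c, m * spX n + g i))) (spX n).+1).
Proof.
move=> hn hc hm hg hs hi.
have [_ hp hu _] := @vert_props f n c m g hn hc hm hg hs hi.
split => //.
set p := mkseq _ _.
have Hp : p = (n,(c, m * spX n + g 0)) :: behead p by [].
have -> : last (n, (c, m * spX n + g 0)) (behead p) = last (n, (c, m * spX n + g 0)) p.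
  by rewrite {2}Hp.
by rewrite -nth_last size_mkseq nth_mkseq.
Qed.

Lemma phi_good f n u : u.1 < f n -> u.2 <= spX n * f n -> YnV f n (phiF n u).2.
Proof.
move=> h1 h2; rewrite /YnV /ladderV /= h1 spY_sq /=.
have := leq_mul h2 (leqnn (spX n)); lia.
Qed.

Lemma edge_facts f n u v : 1 <= n -> XE f n u v ->
 [/\ Ypath f (phiF n u) (phiF n v) (wpF n u v),
     wpF n v u = rev (wpF n u v),
     (forall y, y \in wpF n u v -> y.1 = n /\ YnV f n y.2) &
     (exists m, [/\ u.1 = v.1, (u.2 = m /\ v.2 = m.+1) \/ (u.2 = m.+1 /\ v.2 = m) &
        forall a b, (a,b) \in steps (wpF n u v) ->
          [/\ a.2.1 = u.1, b.2.1 = u.1,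
              m * spX n <= minn a.2.2 b.2.2 < m * spX n + spX n & a.2.2 != b.2.2]])
     \/ (u.1 != v.1 /\ forall a b, (a,b) \in steps (wpF n u v) -> a = phiF n u /\ b = phiF n v)].
Proof.
move=> hn /XE_cases [hu1 hv1 hu2 hv2 hc].
have s0 := spX_gt0 n.
case: hc => [[e1 e2]|[e1 e2]|[ne [e2 [hd hcol]]]].
- have Hw : wpF n u v = mkseq (fun i => (n,(u.1, u.2 * spX n + i))) (spX n).+1.
    by rewrite /wpF e1 eqxx e2 ltnSn.
  have hm : u.2.+1 <= spX n * f n by rewrite -e2.
  have hg : forall i, i <= spX n -> (fun i => i) i <= spX n by [].
  have hs : forall i, i < spX n -> ((fun i => i) i).+1 = (fun i => i) i.+1 \/ ((fun i => i) i.+1).+1 = (fun i => i) i by left.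
  have hi : forall i j, i <= spX n -> j <= spX n -> (fun i => i) i = (fun i => i) j -> i = j by [].
  have [hgood _ _ hst] := @vert_props f n u.1 u.2 (fun i => i) hn hu1 hm hg hs hi.
  split.
  + have -> : phiF n u = (n,(u.1,u.2 * spX n + 0)) by rewrite /phiF addn0.
    have -> : phiF n v = (n,(u.1,u.2 * spX n + spX n)) by rewrite /phiF -e1 e2 mulSn addnC.
    rewrite Hw; exact: (@vert_Ypath f n u.1 u.2 (fun i => i) hn hu1 hm hg hs hi).
  + rewrite Hw rev_mkseq /wpF -e1 eqxx e2 ltnNge leqnSn /=; by [].
  + by rewrite Hw.
  + left; exists u.2; split => //; first by left.
    move=> a b; rewrite Hw => /hst [_ _ -> -> H]; split => //; case: H => //.
- have Hw : wpF n u v = mkseq (fun i => (n,(u.1, v.2 * spX n + (spX n - i)))) (spX n).+1.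
    by rewrite /wpF e1 eqxx e2 ltnNge leqnSn.
  have hm : v.2.+1 <= spX n * f n by rewrite -e2.
  have hg : forall i, i <= spX n -> (fun i => spX n - i) i <= spX n by move=> i _; apply: leq_subr.
  have hs : forall i, i < spX n -> ((fun i => spX n - i) i).+1 = (fun i => spX n - i) i.+1 \/ ((fun i => spX n - i) i.+1).+1 = (fun i => spX n - i) i by move=> i Hi; right; lia.
  have hi : forall i j, i <= spX n -> j <= spX n -> (fun i => spX n - i) i = (fun i => spX n - i) j -> i = j by move=> i j Hi Hj /=; lia.
  have [hgood _ _ hst] := @vert_props f n u.1 v.2 (fun i => spX n - i) hn hu1 hm hg hs hi.
  split.
  + have -> : phiF n u = (n,(u.1,v.2 * spX n + (spX n - 0))) by rewrite /phiF subn0 e2 mulSn addnC.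
    have -> : phiF n v = (n,(u.1,v.2 * spX n + (spX n - spX n))) by rewrite /phiF subnn addn0 -e1.
    rewrite Hw; exact: (@vert_Ypath f n u.1 v.2 (fun i => spX n - i) hn hu1 hm hg hs hi).
  + have -> : wpF n u v = rev (mkseq (fun i => (n,(u.1, v.2 * spX n + i))) (spX n).+1).
      by rewrite Hw rev_mkseq.
    by rewrite revK /wpF -e1 eqxx e2 ltnSn.
  + by rewrite Hw.
  + left; exists v.2; split => //; first by right.
    move=> a b; rewrite Hw => /hst [_ _ -> -> H]; split => //; case: H => //.
- have Hw : wpF n u v = [:: phiF n u; phiF n v] by rewrite /wpF (negbTE ne).
  have pu := @phi_good f n u hu1 hu2. have pv := @phi_good f n v hv1 hv2.
  split.
  + rewrite Hw; split => //=; last first.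
      rewrite inE andbT; apply/negP => /eqP [] e; by rewrite e eqxx in ne.
    rewrite andbT /YE /= hn eqxx /=.
    move: pu pv; rewrite /YnV /YnE /ladderE => -> -> /=.
    apply/orP; right; rewrite e2 eqxx /= spY_sq; apply/andP; split.
      by rewrite -e2 dvdn_mul.
    by case: hcol => ->; rewrite eqxx ?orbT.
  + by rewrite Hw /wpF eq_sym (negbTE ne).
  + by rewrite Hw => y; rewrite !inE => /orP[] /eqP ->.
  + right; split => // a b; rewrite Hw /steps /= inE => /eqP [-> ->] //.
Qed.

Lemma good_in f n (y : Yvert) : y.1 = n -> YnV f n y.2 ->
  y \in [seq (n, (i, k)) | i <- iota 0 (f n), k <- iota 0 (spY n * f n).+1].
Proof.
case: y => [y1 [y2 y3]] E /andP [h1 h2]; simpl in E, h1, h2; subst y1.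
apply: (@allpairs_f _ _ _ (fun i k => (n, (i, k)))); rewrite mem_iota; lia.
Qed.

Theorem lemma4p1 (f : nat -> nat) (hf : admissible_f f) (n : nat) (hn : 1 <= n)
    (GV : pred (nat * nat)) (GE : rel (nat * nat))
    (hG : subgraph_X f n GV GE) :
  exists (phi : nat * nat -> Yvert) (wp : nat * nat -> nat * nat -> seq Yvert),
    coarse_1_wiring f GV GE phi wp /\ volume_le GV GE phi wp (cardVYn f n).
Proof.
case: hG => hV hE hsym.
have s0 := spX_gt0 n.
have XEof : forall u v, GE u v -> XE f n u v by move=> u v /hE /and3P [].
exists (phiF n), (wpF n); split.
- split.
  + move=> u /hV; rewrite /XV /ladderV => /andP [h1 h2]; rewrite /YV /= hn.
    exact: (@phi_good f n u h1 h2).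
  + by move=> u v /XEof /(@edge_facts f n u v hn) [].
  + by move=> u v /XEof /(@edge_facts f n u v hn) [].
  + by move=> u v _ _; apply: phi_inj.
  + move=> u v u' v' h h' hne [a [b [hab hab']]].
    have [_ _ _ I] := @edge_facts f n u v hn (XEof _ _ h).
    have [_ _ _ I'] := @edge_facts f n u' v' hn (XEof _ _ h').
    case: I => [[m [e hm st]] | [ne st]]; case: I' => [[m' [e' hm' st']] | [ne' st']].
    * have [a1 b1 ia ab] := st a b hab.
      have [a1' b1' ia'] : [/\ a.2.1 = u'.1, b.2.1 = u'.1 &
           m' * spX n <= minn a.2.2 b.2.2 < m' * spX n + spX n].
        by case: hab' => /st' [x1 x2 x3 x4]; split => //; rewrite minnC.
      have mm := @m_eq (spX n) m m' _ s0 ia ia'.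
      apply: hne; move: u v u' v' {h h' hab hab' st st' b1 b1' ia ia' ab} e e' hm hm' a1 a1' => [u1 u2] [v1 v2] [u1' u2'] [v1' v2'] /=.
      move=> e e' hm hm' a1 a1'.
      have Eu : u1 = u1' by rewrite -a1 a1'.
      subst.
      by case: hm => [[-> ->]|[-> ->]]; case: hm' => [[-> ->]|[-> ->]]; [left|right|right|left].
    * have [a1 b1 _ _] := st a b hab.
      case: hab' => /st' [ea eb]; move: a1 b1 ne'; rewrite ea eb /= => -> ->; by rewrite eqxx.
    * have [ea eb] := st a b hab.
      case: hab' => /st' [x1 x2 _ _]; move: x1 x2 ne; rewrite ea eb /= => -> ->; by rewrite eqxx.
    * have [ea eb] := st a b hab.
      apply: hne; case: hab' => /st' [ea' eb'].
        by left; split; apply: (@phi_inj n _ _ s0); congruence.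
      by right; split; apply: (@phi_inj n _ _ s0); congruence.
- exists [seq (n, (i, k)) | i <- iota 0 (f n), k <- iota 0 (spY n * f n).+1].
  split.
    by rewrite size_allpairs !size_iota /cardVYn mulnC addn1.
  move=> y [[u [hu <-]] | [u [v [huv hy]]]].
  + apply: good_in => //; move: hu => /hV; rewrite /XV /ladderV => /andP [h1 h2].
    exact: (@phi_good f n u h1 h2).
  + have [_ _ G _] := @edge_facts f n u v hn (XEof _ _ huv).
    by have [? ?] := G y hy; apply: good_in.
Qed.
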